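(* (i) Let $G_1=(V_1,E_1)$ and $G_2=(V_2,E_2)$ be geometric graphs in the same finite-dimensional real vector space $X$, and suppose $V_{12}=V_1\cap V_2$ contains at least two distinct vertices. Let $E_{12}$ be the set of edges of $G_1$ both of whose endpoints lie in $V_{12}$. Let $G=(V,E)$ be a geometric graph in $X$ with $V=V_1\cup V_2$ and $E\supseteq (E_1\setminus E_{12})\cup E_2$. If $G_1$ and $G_2$ are both indecomposable, then $G$ is indecomposable. (ii) Let $G_1=(V_1,E_1)$ and $G_2=(V_2,E_2)$ be indecomposable geometric graphs in the same space $X$, and suppose $V_1\cap V_2$ contains two distinct vertices $u$ and $w$. Let $G=(V,E)$ be the geometric graph with $V=V_1\cup V_2$ and $E=(E_1\setminus\{[u,w]\})\cup E_2$. Then $G$ is indecomposable.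
   Context: A geometric graph is a graph $G=(V,E)$ whose vertex set $V$ is a subset of a finite-dimensional real vector space $X$ and whose edges are line segments $[v,w]$ joining members of $V$. A function $f\colon V\to X$ is a decomposing function for $G$ if, for every edge $[v,w]\in E$, $f(v)-f(w)$ is a scalar multiple (any real scalar, possibly zero or negative) of $v-w$. The graph $G$ is indecomposable if every decomposing function is the restriction to $V$ of a map $x\mapsto \alpha x+z$ for some scalar $\alpha$ and vector $z\in X$ (this includes constant maps); otherwise $G$ is decomposable. In (ii), nothing is assumed about whether $[u,w]$ is an edge of $G_1$ or of $G_2$. *)

(* Defs.v *)
From HB Require Import structures.
From mathcomp Require Import all_boot all_order all_algebra.
From mathcomp Require Import reals.
Set Implicit Arguments. Unset Strict Implicit. Unset Printing Implicit Defensive.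
Import Order.TTheory GRing.Theory Num.Theory.
Local Open Scope ring_scope.

(* Since [v,w] = [w,v], the edge relation is required to be symmetric,
   so that E represents a set of unordered pairs (segments). *)
Definition geometric_graph (R : realType) (n : nat)
  (V : 'rV[R]_n -> Prop) (E : 'rV[R]_n -> 'rV[R]_n -> Prop) : Prop :=
  (forall v w, E v w -> V v /\ V w) /\ (forall v w, E v w -> E w v).

(* f : V -> X is decomposing for G = (V,E) if for every edge [v,w],
   f v - f w is a real multiple of v - w.  (f is given as a total map on X;
   only its values on V matter.) *)
Definition decomposing (R : realType) (n : nat)
  (V : 'rV[R]_n -> Prop) (E : 'rV[R]_n -> 'rV[R]_n -> Prop)
  (f : 'rV[R]_n -> 'rV[R]_n) : Prop :=
  forall v w, E v w -> exists c : R, f v - f w = c *: (v - w).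

Definition indecomposable (R : realType) (n : nat)
  (V : 'rV[R]_n -> Prop) (E : 'rV[R]_n -> 'rV[R]_n -> Prop) : Prop :=
  forall f, decomposing V E f ->
    exists (alpha : R) (z : 'rV[R]_n), forall v, V v -> f v = alpha *: v + z.

(* Main.v *)
Require Import Defs.
From mathcomp Require Import all_boot all_order all_algebra.
From mathcomp Require Import reals.
From Stdlib Require Import Classical.
Local Open Scope ring_scope.
Import GRing.Theory.

Lemma addzK (V : zmodType) (a b z : V) : a + z - (b + z) = a - b.
Proof. by rewrite opprD addrACA subrr addr0. Qed.

Lemma glue {R : realType} {n : nat}
  {V1 : 'rV[R]_n -> Prop} {V2 : 'rV[R]_n -> Prop} {f : 'rV[R]_n -> 'rV[R]_n}
  {u w : 'rV[R]_n} {a1 z1 a2 z2} :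
  u <> w -> V1 u -> V2 u -> V1 w -> V2 w ->
  (forall v, V1 v -> f v = a1 *: v + z1) ->
  (forall v, V2 v -> f v = a2 *: v + z2) ->
  exists (alpha : R) (z : 'rV[R]_n), forall v, V1 v \/ V2 v -> f v = alpha *: v + z.
Proof.
move=> nuw V1u V2u V1w V2w H1 H2.
have eu : a1 *: u + z1 = a2 *: u + z2 by rewrite -H1 // -H2.
have ew : a1 *: w + z1 = a2 *: w + z2 by rewrite -H1 // -H2.
have : (a1 - a2) *: (u - w) = 0.
  have -> : (a1 - a2) *: (u - w) = (a1 *: u + z1 - (a1 *: w + z1)) - (a2 *: u + z2 - (a2 *: w + z2)).
    rewrite scalerBl !scalerBr.
    by rewrite !addzK.
  by rewrite eu ew subrr.
move/eqP; rewrite scaler_eq0 => /orP [/eqP|/eqP]; last first.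
  by move/eqP; rewrite subr_eq0 => /eqP.
move/eqP; rewrite subr_eq0 => /eqP ea; subst a2.
have ez : z1 = z2 by move/addrI: eu.
subst z2.
by exists a1, z1 => v [] ?; [apply: H1|apply: H2].
Qed.

Theorem theorem2 :
  (* (i) *)
  (forall (R : realType) (n : nat)
     (V1 : 'rV[R]_n -> Prop) (E1 : 'rV[R]_n -> 'rV[R]_n -> Prop)
     (V2 : 'rV[R]_n -> Prop) (E2 : 'rV[R]_n -> 'rV[R]_n -> Prop)
     (V : 'rV[R]_n -> Prop) (E : 'rV[R]_n -> 'rV[R]_n -> Prop),
     geometric_graph V1 E1 -> geometric_graph V2 E2 -> geometric_graph V E ->
     (exists u w : 'rV[R]_n, u <> w /\ (V1 u /\ V2 u) /\ (V1 w /\ V2 w)) ->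
     (forall x, V x <-> V1 x \/ V2 x) ->
     (forall a b,
        (E1 a b /\ ~ ((V1 a /\ V2 a) /\ (V1 b /\ V2 b))) \/ E2 a b -> E a b) ->
     indecomposable V1 E1 -> indecomposable V2 E2 ->
     indecomposable V E)
  /\
  (* (ii) *)
  (forall (R : realType) (n : nat)
     (V1 : 'rV[R]_n -> Prop) (E1 : 'rV[R]_n -> 'rV[R]_n -> Prop)
     (V2 : 'rV[R]_n -> Prop) (E2 : 'rV[R]_n -> 'rV[R]_n -> Prop)
     (u w : 'rV[R]_n),
     geometric_graph V1 E1 -> geometric_graph V2 E2 ->
     indecomposable V1 E1 -> indecomposable V2 E2 ->
     u <> w -> V1 u -> V2 u -> V1 w -> V2 w ->
     indecomposable (fun x => V1 x \/ V2 x)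
       (fun a b => (E1 a b /\ ~ ((a = u /\ b = w) \/ (a = w /\ b = u)))
                   \/ E2 a b)).
Proof.
split.
- move=> R n V1 E1 V2 E2 V E _ _ _ [u [w [nuw [[V1u V2u] [V1w V2w]]]]] HV HE I1 I2 f Hf.
  have [a2 [z2 H2]] : exists (alpha : R) (z : 'rV[R]_n), forall v, V2 v -> f v = alpha *: v + z.
    by apply: I2 => a b e; apply: Hf; apply: HE; right.
  have [a1 [z1 H1]] : exists (alpha : R) (z : 'rV[R]_n), forall v, V1 v -> f v = alpha *: v + z.
    apply: I1 => a b e.
    case: (classic ((V1 a /\ V2 a) /\ (V1 b /\ V2 b))) => [[[_ Ha] [_ Hb]]|nc].
      exists a2; rewrite H2 // H2 // scalerBr addzK.
      reflexivity.
    exact: (Hf a b (HE a b (or_introl (conj e nc)))).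
  have [al [z Hz]] := glue (f:=f) (a1:=a1) (z1:=z1) (a2:=a2) (z2:=z2) nuw V1u V2u V1w V2w H1 H2.
  by exists al, z => v /HV; apply: Hz.
- move=> R n V1 E1 V2 E2 u w _ _ I1 I2 nuw V1u V2u V1w V2w f Hf.
  have [a2 [z2 H2]] : exists (alpha : R) (z : 'rV[R]_n), forall v, V2 v -> f v = alpha *: v + z.
    by apply: I2 => a b e; apply: Hf; right.
  have [a1 [z1 H1]] : exists (alpha : R) (z : 'rV[R]_n), forall v, V1 v -> f v = alpha *: v + z.
    apply: I1 => a b e.
    case: (classic ((a = u /\ b = w) \/ (a = w /\ b = u))) => [c|nc].
      have [Ha Hb] : V2 a /\ V2 b by case: c => -[-> ->].
      exists a2; rewrite H2 // H2 // scalerBr addzK.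
      reflexivity.
    exact: (Hf a b (or_introl (conj e nc))).
  exact: (glue (f:=f) (a1:=a1) (z1:=z1) (a2:=a2) (z2:=z2) nuw V1u V2u V1w V2w H1 H2).
Qed.
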